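(* Let $n\ge2$ and let $G\subsetneq\mathbb{R}^n$ be a domain. Then $G$ is convex if and only if $s_G(x,y)\le p_G(x,y)$ for all $x,y\in G$.
   Context: A domain is a non-empty, open, connected set. $d_G(x)=\inf\{|x-z|:z\in\partial G\}$, $s_G(x,y)=\frac{|x-y|}{\inf_{z\in\partial G}(|x-z|+|z-y|)}$, $p_G(x,y)=\frac{|x-y|}{\sqrt{|x-y|^2+4d_G(x)d_G(y)}}$. *)

(* Defs.v *)
From HB Require Import structures.
From mathcomp Require Import all_boot all_order all_algebra.
From mathcomp Require Import all_classical all_reals all_analysis.
Set Implicit Arguments. Unset Strict Implicit. Unset Printing Implicit Defensive.
Import Order.TTheory GRing.Theory Num.Theory.
Import numFieldNormedType.Exports.
Local Open Scope classical_set_scope.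
Local Open Scope ring_scope.

Section Defs.
Variables (R : realType) (n : nat).

(* Euclidean norm |x| on R^n (the library's default norm on 'rV is the sup
   norm, which induces the same topology but a different metric). *)
Definition enorm (x : 'rV[R]_n) : R := Num.sqrt (\sum_(i < n) x ord0 i ^+ 2).

Definition domain (G : set 'rV[R]_n) : Prop :=
  G !=set0 /\ open G /\ connected G.

Definition bd (G : set 'rV[R]_n) : set 'rV[R]_n :=
  closure G `\` interior G.

Definition dG (G : set 'rV[R]_n) (x : 'rV[R]_n) : R :=
  inf [set enorm (x - z) | z in bd G].

Definition sG (G : set 'rV[R]_n) (x y : 'rV[R]_n) : R :=
  enorm (x - y) / inf [set enorm (x - z) + enorm (z - y) | z in bd G].

Definition pG (G : set 'rV[R]_n) (x y : 'rV[R]_n) : R :=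
  enorm (x - y) /
    Num.sqrt (enorm (x - y) ^+ 2 + 4 * dG G x * dG G y).

Definition convex_dom (G : set 'rV[R]_n) : Prop :=
  forall x y, G x -> G y -> forall t : R, 0 <= t -> t <= 1 ->
    G ((1 - t) *: x + t *: y).

End Defs.

(* Main.v *)
Require Import Defs.
From HB Require Import structures.
From mathcomp Require Import all_boot all_order all_algebra.
From mathcomp Require Import all_classical all_reals all_analysis.
From mathcomp Require Import ring lra.
Import Order.TTheory GRing.Theory Num.Theory.
Import numFieldNormedType.Exports.
Local Open Scope classical_set_scope.
Local Open Scope ring_scope.

Lemma enorm_ge0 (R : realType) n (v : 'rV[R]_n) : 0 <= enorm v.
Proof. exact: sqrtr_ge0. Qed.

Lemma enorm_sq (R : realType) n (v : 'rV[R]_n) :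
  enorm v ^+ 2 = \sum_i v ord0 i ^+ 2.
Proof. by rewrite sqr_sqrtr // sumr_ge0 // => i _; rewrite sqr_ge0. Qed.

Lemma enormZ (R : realType) n (c : R) (v : 'rV[R]_n) :
  enorm (c *: v) = `|c| * enorm v.
Proof.
rewrite /enorm (eq_bigr (fun i => c ^+ 2 * v ord0 i ^+ 2)); last first.
  by move=> i _; rewrite mxE exprMn.
by rewrite -mulr_sumr sqrtrM ?sqr_ge0 // sqrtr_sqr.
Qed.

Lemma enormB (R : realType) n (x y : 'rV[R]_n) : enorm (x - y) = enorm (y - x).
Proof. by rewrite -opprB -scaleN1r enormZ normrN normr1 mul1r. Qed.

Lemma mxnorm_le_enorm (R : realType) n (v : 'rV[R]_n) : `|v| <= enorm v.
Proof.
rewrite [`|v|]mx_normrE; apply: bigmax_le => [|[i j] _]; first exact: enorm_ge0.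
rewrite /= (ord1 i) -sqrtr_sqr /enorm ler_sqrt ?sumr_ge0 // => [|k _]; last by rewrite sqr_ge0.
by rewrite (bigD1 j) //= lerDl sumr_ge0 // => k _; rewrite sqr_ge0.
Qed.

Arguments mxnorm_le_enorm {R n}.

Definition dot {R : realType} {n} (P Q : 'rV[R]_n) := \sum_i P ord0 i * Q ord0 i.

Lemma sq_comb (R : realType) n (P Q : 'rV[R]_n) (a b : R) :
  \sum_i (a * P ord0 i + b * Q ord0 i) ^+ 2 =
  a ^+ 2 * enorm P ^+ 2 + b ^+ 2 * enorm Q ^+ 2 + 2 * a * b * dot P Q.
Proof.
rewrite !enorm_sq /dot !mulr_sumr -!big_split /=; apply: eq_bigr => i _; ring.
Qed.

Arguments sq_comb {R n}.

Lemma nbhs_norm (R : realType) n (x : 'rV[R]_n) (B : set 'rV[R]_n) :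
  nbhs x B -> exists2 e : R, 0 < e & forall y, `|x - y| < e -> B y.
Proof.
rewrite -filter_from_norm_nbhs => -[e /= e0 H]; exists e => // y hy; exact: H.
Qed.

Lemma seg (R : realType) n (G : set 'rV[R]_n) x q : open G -> G x -> ~ G q ->
  exists2 s : R, 0 <= s <= 1 & bd G (x + s *: (q - x)).
Proof.
rewrite openE => oG Gx Gq.
set f := fun s : R => x + s *: (q - x).
set c := `|q - x|.
have c0 : 0 <= c by exact: normr_ge0.
have fd : forall s t, `|f s - f t| = `|s - t| * c.
  move=> s t; rewrite /f opprD addrACA subrr add0r -scaleNr -scalerDl normrZ //.
set T := [set t : R | 0 <= t <= 1 /\ forall s, 0 <= s <= t -> G (f s)].
have T0 : T 0.
  split; first by rewrite lexx ler01.
  move=> s /andP[s0 s0']; have -> : s = 0 by apply/le_anti; rewrite s0 s0'.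
  by rewrite /f scale0r addr0.
have ub1 : ubound T 1 by move=> t [/andP[_ ]].
have hs : has_sup T by split; [exists 0 | exists 1].
set ts := sup T.
have ts0 : 0 <= ts := sup_upper_bound hs T0.
have ts1 : ts <= 1 := ge_sup (ex_intro _ 0 T0) ub1.
have below : forall s, 0 <= s -> s < ts -> G (f s).
  move=> s s0 sts.
  have hp : 0 < ts - s by rewrite subr_gt0.
  have [e [_ Te] lt] := sup_adherent hp hs.
  apply: Te; rewrite s0 /=; move: lt; rewrite /ts; lra.
have nG : ~ G (f ts).
  move=> Gz; have := oG _ Gz => /nbhs_norm [e e0 He].
  have ts_lt1 : ts < 1.
    rewrite lt_neqAle ts1 andbT; apply/eqP => E; apply: Gq.
    by move: Gz; rewrite E /f scale1r addrC subrK.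
  have c1 : 0 < c + 1 by lra.
  have ec : e / (c + 1) * (c + 1) = e by field; lra.
  have ec0 : 0 < e / (c + 1) by exact: divr_gt0.
  set m := Num.min (e / (c + 1)) (1 - ts).
  have m1 : m <= e / (c + 1) by rewrite /m ge_min lexx.
  have m2 : m <= 1 - ts by rewrite /m ge_min lexx orbT.
  have m0 : 0 < m by rewrite /m lt_min ec0 subr_gt0 ts_lt1.
  have : T (ts + m / 2).
    split; first by apply/andP; split; lra.
    move=> s /andP[s0 sle]; case: (ltP s ts) => [slt | tss]; first exact: below.
    apply: He; rewrite fd distrC ger0_norm; last lra.
    have h1 : (s - ts) * c <= m / 2 * c by apply: ler_wpM2r => //; lra.
    have h2 : m / 2 * (c + 1) <= e / (c + 1) / 2 * (c + 1) by apply: ler_wpM2r; lra.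
    nra.
  move=> /(sup_upper_bound hs); rewrite -/ts; lra.
have cl : closure G (f ts).
  move=> B /nbhs_norm[e e0 He].
  have ts_pos : 0 < ts.
    rewrite lt_neqAle ts0 andbT; apply/eqP => E; apply: nG.
    by rewrite -E /f scale0r addr0.
  have c1 : 0 < c + 1 by lra.
  have ec : e / (c + 1) * (c + 1) = e by field; lra.
  have ec0 : 0 < e / (c + 1) by exact: divr_gt0.
  set m := Num.min ts (e / (c + 1)).
  have m1 : m <= e / (c + 1) by rewrite /m ge_min lexx orbT.
  have m2 : m <= ts by rewrite /m ge_min lexx.
  have m0 : 0 < m by rewrite /m lt_min ec0 ts_pos.
  exists (f (ts - m / 2)); split; first by apply: below; lra.
  apply: He; rewrite fd ger0_norm; last lra.
  have h1 : (ts - (ts - m / 2)) * c <= m / 2 * c by apply: ler_wpM2r => //; lra.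
  have h2 : m / 2 * (c + 1) <= e / (c + 1) / 2 * (c + 1) by apply: ler_wpM2r; lra.
  nra.
exists ts; first by rewrite ts0 ts1.
by split => // /interior_subset.
Qed.

Arguments seg {R n G x q}.

Lemma enormN (R : realType) n (v : 'rV[R]_n) : enorm (- v) = enorm v.
Proof. by rewrite -scaleN1r enormZ normrN normr1 mul1r. Qed.

Lemma enorm_gt0 (R : realType) n (v : 'rV[R]_n) : v != 0 -> 0 < enorm v.
Proof.
move=> v0; rewrite lt_neqAle enorm_ge0 andbT; apply/eqP => e0.
have := mxnorm_le_enorm v; rewrite -e0 => h.
have : `|v| = 0 by apply/le_anti; rewrite h normr_ge0.
by move/normr0_eq0 => v0'; move: v0; rewrite v0' eqxx.
Qed.

Lemma inf_ge0 (R : realType) (S : set R) : (forall y, S y -> 0 <= y) -> 0 <= inf S.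
Proof.
move=> h; have [ne|e] := pselect (S !=set0); first exact: lb_le_inf.
have -> : S = set0 by apply/seteqP; split => y Sy //; apply: e; exists y.
by rewrite inf0.
Qed.

Lemma dG_ge0 (R : realType) n (G : set 'rV[R]_n) x : 0 <= dG G x.
Proof. by apply: inf_ge0 => _ [z _ <-]; exact: enorm_ge0. Qed.

Lemma dG_le (R : realType) n (G : set 'rV[R]_n) x z : bd G z -> dG G x <= enorm (x - z).
Proof.
move=> bz; apply: ge_inf; last by exists z.
by exists 0 => _ [w _ <-]; exact: enorm_ge0.
Qed.

Arguments dG_le {R n G} x {z}.

Lemma ball_in (R : realType) n (G : set 'rV[R]_n) x p : open G -> G x ->
  enorm (p - x) < dG G x -> G p.
Proof.
move=> oG Gx hp; apply/not_notP => Gp.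
have [s /andP[s0 s1] bz] := seg oG Gx Gp.
have := dG_le x bz.
rewrite opprD addrA subrr add0r enormN enormZ ger0_norm //.
have := enorm_ge0 _ _ (p - x); nra.
Qed.

Lemma core (R : realType) n (G : set 'rV[R]_n) x y z a b :
  convex_dom G -> G x -> G y -> ~ G z -> 0 <= a -> 0 <= b ->
  (forall p, enorm (p - x) < a -> G p) -> (forall p, enorm (p - y) < b -> G p) ->
  enorm (x - y) ^+ 2 + 4 * a * b <= (enorm (x - z) + enorm (z - y)) ^+ 2.
Proof.
move=> cG Gx Gy Gz a0 b0 Ba Bb; rewrite leNgt; apply/negP => H.
set u := enorm (x - z) in H; set v := enorm (z - y) in H; set d := enorm (x - y) in H.
set P := z - x; set Q := z - y.
have uP : u = enorm P by rewrite /u enormB.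
have u0 : 0 < u.
  rewrite uP enorm_gt0 //; apply/eqP => e; apply: Gz.
  by move/eqP: e; rewrite subr_eq0 => /eqP ->.
have v0 : 0 < v.
  rewrite enorm_gt0 //; apply/eqP => e; apply: Gz.
  by move/eqP: e; rewrite subr_eq0 => /eqP ->.
have dd : d ^+ 2 = u ^+ 2 + v ^+ 2 - 2 * dot P Q.
  have e1 : d ^+ 2 = \sum_i ((-1) * P ord0 i + 1 * Q ord0 i) ^+ 2.
    by rewrite /d enorm_sq; apply: eq_bigr => i _; rewrite /P /Q !mxE; ring.
  rewrite e1 sq_comb -uP /v -/Q; ring.
set W := v *: P + u *: Q.
set N := enorm W.
have N0 : 0 <= N := enorm_ge0 _ _ W.
have NN : N ^+ 2 = u * v * ((u + v) ^+ 2 - d ^+ 2).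
  rewrite /N enorm_sq.
  have -> : \sum_i W ord0 i ^+ 2 = \sum_i (v * P ord0 i + u * Q ord0 i) ^+ 2.
    by apply: eq_bigr => i _; rewrite /W !mxE.
  rewrite sq_comb -uP -/v dd; ring.
have Sd : d ^+ 2 <= (u + v) ^+ 2.
  rewrite leNgt; apply/negP => h.
  have : 0 < u * v * (d ^+ 2 - (u + v) ^+ 2).
    by apply: mulr_gt0; [exact: mulr_gt0 | rewrite subr_gt0].
  have := sqr_ge0 N; rewrite NN; lra.
have ab : 0 < a * b by nra.
have a1 : 0 < a by nra.
have b1 : 0 < b by nra.
set L := v * a + u * b.
have L0 : 0 < L by rewrite /L; nra.
have NL : N < L.
  have h1 : N ^+ 2 < 4 * a * b * (u * v).
    rewrite NN; have : 0 < u * v by exact: mulr_gt0.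
    nra.
  have h2 : 4 * a * b * (u * v) <= L ^+ 2.
    rewrite /L; have := sqr_ge0 (v * a - u * b); nra.
  nra.
set p := x + (a / L) *: W.
set q := y + (b / L) *: W.
have Gp : G p.
  apply: Ba; rewrite /p addrAC subrr add0r enormZ ger0_norm; last first.
    by apply: divr_ge0 => //; exact: ltW.
  rewrite -/N mulrAC ltr_pdivrMr //; nra.
have Gq : G q.
  apply: Bb; rewrite /q addrAC subrr add0r enormZ ger0_norm; last first.
    by apply: divr_ge0 => //; exact: ltW.
  rewrite -/N mulrAC ltr_pdivrMr //; nra.
have S0 : 0 < u + v by lra.
have t0 : 0 <= u / (u + v) by apply: divr_ge0; lra.
have t1 : u / (u + v) <= 1 by rewrite ler_pdivrMr //; lra.
have := cG _ _ Gp Gq _ t0 t1.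
have -> : (1 - u / (u + v)) *: p + (u / (u + v)) *: q = z.
  apply/rowP => i; rewrite /p /q /W /P /Q !mxE.
  rewrite /L; field.
  by apply/andP; split; apply/lt0r_neq0; rewrite ?L0 ?S0.
by [].
Qed.

Lemma bd_notG (R : realType) n (G : set 'rV[R]_n) z : open G -> bd G z -> ~ G z.
Proof. by rewrite openE => oG [_ nz] Gz; apply: nz; exact: oG. Qed.

Arguments bd_notG {R n G z}.

Lemma pos_rad (R : realType) n (G : set 'rV[R]_n) x : open G -> G x ->
  exists2 e : R, 0 < e & forall z, bd G z -> e <= enorm (x - z).
Proof.
move=> oG Gx; have := oG; rewrite openE => /(_ _ Gx) /nbhs_norm [e e0 He].
exists e => // z bz; apply: le_trans (mxnorm_le_enorm _); rewrite leNgt; apply/negP.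
by move=> /He; apply: bd_notG bz.
Qed.

Arguments pos_rad {R n G x}.

Theorem theorem3p7 (R : realType) (n : nat) (G : set 'rV[R]_n) :
  (2 <= n)%N -> domain G -> G <> setT ->
  (convex_dom G <-> forall x y, G x -> G y -> sG G x y <= pG G x y).
Proof.
move=> _ [_ [oG _]] _; split.
- move=> cG x y Gx Gy.
  have pG0 : 0 <= pG G x y by apply: divr_ge0; [exact: enorm_ge0 | exact: sqrtr_ge0].
  set d := enorm (x - y).
  have [d0|dpos] := eqVneq d 0.
    by rewrite /sG -/d d0 mul0r.
  have dp : 0 < d by rewrite lt_neqAle eq_sym dpos enorm_ge0.
  set Aset := [set enorm (x - z) + enorm (z - y) | z in bd G].
  have [ne|emp] := pselect (Aset !=set0); last first.
    have -> : sG G x y = 0; last exact: pG0.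
    rewrite /sG -/Aset.
    have -> : Aset = set0 by apply/seteqP; split => w Sw //; apply: emp; exists w.
    by rewrite inf0 invr0 mulr0.
  set X := d ^+ 2 + 4 * dG G x * dG G y.
  have X0 : 0 < X.
    have := dG_ge0 _ _ G x; have := dG_ge0 _ _ G y => h1 h2.
    rewrite /X; have := mulr_ge0 h2 h1; have : 0 < d ^+ 2 by exact: exprn_gt0. nra.
  have r0 : 0 < Num.sqrt X by rewrite sqrtr_gt0.
  have rA : Num.sqrt X <= inf Aset.
    apply: lb_le_inf => // _ [z bz <-].
    have S0 : 0 <= enorm (x - z) + enorm (z - y) by apply: addr_ge0; exact: enorm_ge0.
    rewrite -(ger0_norm S0) -sqrtr_sqr ler_sqrt; last exact: sqr_ge0.
    apply: (@core R n G x y z (dG G x) (dG G y)) => //.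
    + exact: bd_notG oG bz.
    + exact: dG_ge0.
    + exact: dG_ge0.
    + by move=> p; apply: ball_in.
    + by move=> p; apply: ball_in.
  have A0 : 0 < inf Aset by apply: lt_le_trans rA.
  rewrite /sG /pG -/d -/Aset -/X ler_pdivrMr // mulrAC ler_pdivlMr //.
  by apply: ler_wpM2l => //; exact: ltW.
- move=> H x y Gx Gy t t0 t1; apply/not_notP => Gw.
  have [s /andP[s0 s1] bz] := seg oG Gx Gw.
  set z := x + s *: ((1 - t) *: x + t *: y - x) in bz.
  set r := s * t.
  have r0 : 0 <= r by exact: mulr_ge0.
  have r1 : r <= 1 by rewrite /r; nra.
  have ez1 : x - z = r *: (x - y) by apply/rowP => i; rewrite /z /r !mxE; ring.
  have ez2 : z - y = (1 - r) *: (x - y) by apply/rowP => i; rewrite /z /r !mxE; ring.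
  set d := enorm (x - y).
  have xy : x - y != 0.
    apply/negP => /eqP e; apply: Gw; move/eqP: e; rewrite subr_eq0 => /eqP <-.
    by rewrite -scalerDl subrK scale1r.
  have dp : 0 < d by exact: enorm_gt0.
  set Aset := [set enorm (x - z) + enorm (z - y) | z in bd G].
  have Ad : inf Aset <= d.
    apply: ge_inf; last first.
      exists z => //; rewrite ez1 ez2 !enormZ !ger0_norm -/d //; [ring | lra].
    by exists 0 => _ [w _ <-]; apply: addr_ge0; exact: enorm_ge0.
  have [e e0 He] := pos_rad oG Gx.
  have [e' e0' He'] := pos_rad oG Gy.
  have A0 : 0 < inf Aset.
    apply: lt_le_trans e0 _; apply: lb_le_inf; first by exists (enorm (x - z) + enorm (z - y)); exists z.
    move=> _ [w bw <-]; have := He _ bw; have := enorm_ge0 _ _ (w - y); lra.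
  have dx : 0 < dG G x.
    apply: lt_le_trans e0 _; apply: lb_le_inf; first by exists (enorm (x - z)); exists z.
    by move=> _ [w bw <-]; exact: He.
  have dy : 0 < dG G y.
    apply: lt_le_trans e0' _; apply: lb_le_inf; first by exists (enorm (y - z)); exists z.
    by move=> _ [w bw <-]; exact: He'.
  have := H x y Gx Gy; apply/negP; rewrite -ltNge.
  rewrite /sG /pG -/d -/Aset.
  set X := d ^+ 2 + 4 * dG G x * dG G y.
  have dX : d < Num.sqrt X.
    rewrite -(ger0_norm (ltW dp)) -sqrtr_sqr ltr_sqrt; last first.
      rewrite /X; have := mulr_gt0 dx dy; have : 0 < d ^+ 2 by exact: exprn_gt0. nra.
    rewrite /X; have := mulr_gt0 dx dy; nra.
  have sX : 0 < Num.sqrt X by apply: lt_trans dX; exact: dp.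
  rewrite ltr_pdivrMr // mulrAC ltr_pdivlMr //.
  by rewrite ltr_pM2l //; exact: le_lt_trans Ad dX.
Qed.
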